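(* Let $r\le n-1$ and let $P=P(m_1,\dots,m_{n-1})$ be a natural unit interval order with $m_1=\cdots=m_{r-1}=r$ and $m_r=\cdots=m_{n-1}=n$, and let $G=\mathrm{inc}(P)$. Then $$X_G(\mathbf{x},t)=\sum_{\ell=0}^{\min\{n-r,r-1\}}t^\ell\,[n-r]_t!\,[r-1]_t!\,[n-2\ell]_t\,e_{(n-\ell,\ell)}.$$
   Context: A natural unit interval order $P(m_1,\dots,m_{n-1})$ is defined for integers $m_1\le\cdots\le m_{n-1}\le n$ with $m_i\ge i$: it is the poset on $[n]$ with $i<_P j$ iff $i<n$ and $j\in\{m_i+1,\dots,n\}$. Its incomparability graph has vertex set $[n]$ and an edge $\{i,j\}$ ($i<j$) iff $j\le m_i$. The chromatic quasisymmetric function of a graph $G$ on $V\subset\mathbb{P}$ is $X_G(\mathbf{x},t)=\sum_\kappa t^{\mathrm{asc}(\kappa)}\prod_v x_{\kappa(v)}$ over proper colorings $\kappa:V\to\mathbb{P}$, with $\mathrm{asc}(\kappa)$ the number of edges $\{i,j\}$, $i<j$, with $\kappa(i)<\kappa(j)$. $[m]_t=1+t+\cdots+t^{m-1}$, $[m]_t!=[1]_t\cdots[m]_t$, $[0]_t!=1$; $e_{(n,0)}=e_n$ and $e_\lambda$ denotes elementary symmetric functions. *)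

(* Defs.v *)
From HB Require Import structures.
From mathcomp Require Import all_boot all_order all_algebra.
From mathcomp Require Import mpoly.
Set Implicit Arguments. Unset Strict Implicit. Unset Printing Implicit Defensive.
Import Order.TTheory GRing.Theory.
Local Open Scope ring_scope.

Definition tpoly := {poly int}.

Definition qint (m : nat) : tpoly := \sum_(i < m) 'X^i.
Definition qfact (m : nat) : tpoly := \prod_(1 <= i < m.+1) qint i.

(* Incomparability graph of the natural unit interval order P(m_1,...,m_{n-1})
   on [n] = {1,...,n}.  Vertices are encoded as i : 'I_n standing for i+1;
   m is given 1-indexed (m k = m_k).  For vertices a < b (as integers),
   {a,b} is an edge iff b <= m_a. *)
Definition nuio_edge (n : nat) (m : nat -> nat) (i j : 'I_n) : bool :=
  (i < j)%N && (j.+1 <= m i.+1)%N.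

(* proper colorings of a graph given by an "upward" edge relation e (e i j only
   for i < j), with colors in 'I_N (i.e. colors 1..N) *)
Definition proper (n N : nat) (e : 'I_n -> 'I_n -> bool)
  (k : {ffun 'I_n -> 'I_N}) : bool :=
  [forall i, forall j, e i j ==> (k i != k j)].

Definition asc (n N : nat) (e : 'I_n -> 'I_n -> bool)
  (k : {ffun 'I_n -> 'I_N}) : nat :=
  #|[set p : 'I_n * 'I_n | e p.1 p.2 && (k p.1 < k p.2)%N]|.

(* The chromatic quasisymmetric function X_G(x,t) truncated to the variables
   x_1,...,x_N (i.e. x_i = 0 for i > N); a formal power series is determined by
   all these truncations. *)
Definition chromQS (n N : nat) (e : 'I_n -> 'I_n -> bool) : {mpoly tpoly[N]} :=
  \sum_(k : {ffun 'I_n -> 'I_N} | proper e k)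
     ('X^(asc e k) : tpoly)%:MP * \prod_(v : 'I_n) 'X_(k v).

Definition e2 (N a b : nat) : {mpoly tpoly[N]} := mesym N tpoly a * mesym N tpoly b.

Definition m_cor (n r : nat) (i : nat) : nat := if (i < r)%N then r else n.

(* Main.v *)
Require Import Defs.
From HB Require Import structures.
From mathcomp Require Import all_boot all_order all_algebra.
From mathcomp Require Import mpoly.
From mathcomp Require Import zify ring.
Import GRing.Theory.
Local Open Scope ring_scope.

Module PA.
Set Implicit Arguments. Unset Strict Implicit. Unset Printing Implicit Defensive.

Section SetLemmas.
Variable R : comNzRingType.

Lemma add1_big (T : finType) (c : T) (Q : pred {set T}) (F : {set T} -> R) :
  \sum_(S : {set T} | (c \in S) && Q S) F S = \sum_(S : {set T} | (c \notin S) && Q (c |: S)) F (c |: S).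
Proof.
rewrite (reindex_onto (fun S => c |: S) (fun S => S :\ c)) /=; last first.
  by move=> S /andP[cS _]; rewrite setD1K.
apply: eq_bigl => S; rewrite setU11 /=.
case cS: (c \in S) => /=.
  case: (Q _); rewrite //=; apply/negbTE; apply/negP => /eqP E.
  by move: cS; rewrite -E setD11.
by rewrite setU1K ?cS // eqxx andbT.
Qed.

Lemma rank_sum (N : nat) (x : R) (S : {set 'I_N}) :
  \sum_(c in S) x ^+ #|[set y in S | (y < c)%N]| = \sum_(i < #|S|) x ^+ i.
Proof.
move Sk: #|S| => k; elim: k S Sk => [|k IH] S Sk.
  move/eqP: Sk; rewrite cards_eq0 => /eqP ->.
  by rewrite big_set0 big_ord0.
have [c0 c0S] : exists c0, c0 \in S.
  by apply/set0Pn; rewrite -card_gt0 Sk.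
case: (arg_maxnP (fun i : 'I_N => val i) c0S) => m mS mmax.
have {}mS : m \in S := mS.
have Sm : #|S :\ m| = k by move: Sk; rewrite (cardsD1 m) mS add1n => -[].
rewrite (bigD1 m) //= big_ord_recr /= addrC; congr (_ + _); last first.
  have -> : [set y in S | (y < m)%N] = S :\ m.
    apply/setP => y; rewrite !inE; case yS: (y \in S); rewrite ?andbF ?andbT //=.
    by have := mmax y yS; rewrite /= => ym; rewrite -val_eqE /= ltn_neqAle ym andbT.
  by rewrite Sm.
rewrite -(IH _ Sm) (eq_bigl (fun c => c \in S :\ m)); last first.
  by move=> y; rewrite !inE andbC.
apply: eq_bigr => c; rewrite !inE => /andP[cm cS]; congr (_ ^+ _); apply: eq_card => y.
rewrite !inE; case yS: (y \in S); rewrite ?andbF ?andbT //=.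
case ycm: (y < c)%N; rewrite ?andbF ?andbT //.
apply/esym/negP => /eqP ym; have := mmax c cS; rewrite /= -ym leqNgt ycm.
by [].
Qed.

End SetLemmas.

End PA.
Import PA.

Module PB.
Set Implicit Arguments. Unset Strict Implicit. Unset Printing Implicit Defensive.

Section Ffun.
Variable T : finType.
Variable m : nat.

Definition fext (k : {ffun 'I_m -> T}) (c : T) : {ffun 'I_m.+1 -> T} :=
  [ffun i => if unlift ord_max i is Some j then k j else c].
Definition frest (k : {ffun 'I_m.+1 -> T}) : {ffun 'I_m -> T} :=
  [ffun j => k (widen_ord (leqnSn m) j)].

Lemma widen_lift (j : 'I_m) : widen_ord (leqnSn m) j = lift ord_max j.
Proof. by apply: val_inj; rewrite /= /bump leqNgt ltn_ord. Qed.

Lemma fext_widen k c j : fext k c (widen_ord (leqnSn m) j) = k j.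
Proof. by rewrite ffunE widen_lift liftK. Qed.

Lemma fext_max k c : fext k c ord_max = c.
Proof. by rewrite ffunE unlift_none. Qed.

Lemma big_fext (R : Type) (idx : R) (op : Monoid.com_law idx)
   (P : pred {ffun 'I_m.+1 -> T}) (F : {ffun 'I_m.+1 -> T} -> R) :
  \big[op/idx]_(k | P k) F k =
  \big[op/idx]_(k' : {ffun 'I_m -> T}) \big[op/idx]_(c | P (fext k' c)) F (fext k' c).
Proof.
rewrite pair_big_dep /=.
rewrite (reindex (fun p : {ffun 'I_m -> T} * T => fext p.1 p.2)) /=.
  by apply: eq_bigl.
exists (fun k => (frest k, k ord_max)).
  move=> [k c] _ /=; rewrite fext_max; congr (_, _).
  by apply/ffunP => j; rewrite ffunE fext_widen.
move=> k _ /=; apply/ffunP => i; rewrite ffunE.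
case: (unliftP ord_max i) => [j ->|->] //.
by rewrite ffunE widen_lift.
Qed.

End Ffun.

Section Clique.
Variable N : nat.

Definition ascC m (k : {ffun 'I_m -> 'I_N}) : nat :=
  (\sum_(i < m) \sum_(j < m) ((i < j) && (k i < k j)))%N.
Definition psC m (k : {ffun 'I_m -> 'I_N}) : nat :=
  (\sum_(i < m) \sum_(j < m) ((i < j) && (k i == k j)))%N.
Definition injC m (k : {ffun 'I_m -> 'I_N}) : bool := (psC k == 0)%N.
Definition fimg m (k : {ffun 'I_m -> 'I_N}) : {set 'I_N} := [set k i | i : 'I_m].

Lemma peel_sum m (OP : rel 'I_N) (k : {ffun 'I_m -> 'I_N}) c :
  (\sum_(i < m.+1) \sum_(j < m.+1) ((i < j) && OP (fext k c i) (fext k c j)) =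
  \sum_(i < m) \sum_(j < m) ((i < j) && OP (k i) (k j)) + \sum_(i < m) OP (k i) c)%N.
Proof.
rewrite big_ord_recr /= [X in (_ + X)%N]big1 ?addn0; last first.
  by move=> j _; rewrite ltnNge leq_ord.
rewrite -big_split; apply: eq_bigr => i _ /=.
rewrite big_ord_recr /= !fext_widen fext_max ltn_ord.
by congr (_ + _)%N; apply: eq_bigr => j _; rewrite fext_widen.
Qed.

Lemma injC_fext m (k : {ffun 'I_m -> 'I_N}) c :
  injC (fext k c) = injC k && (c \notin fimg k).
Proof.
rewrite /injC /psC (peel_sum (fun u v => u == v)) addn_eq0; congr (_ && _).
rewrite sum_nat_eq0 /fimg; apply/forallP/negP => [H /imsetP[i _ ci] | H i].
  by move: (H i); rewrite ci eqxx.
by case e: (k i == c) => //; case: H; apply/imsetP; exists i => //; rewrite (eqP e).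
Qed.

Lemma ascC_fext m (k : {ffun 'I_m -> 'I_N}) c :
  ascC (fext k c) = (ascC k + \sum_(i < m) (k i < c))%N.
Proof. by rewrite /ascC (peel_sum (fun u v => (u < v)%N)). Qed.

Lemma injC_inj m (k : {ffun 'I_m -> 'I_N}) : injC k -> injective k.
Proof.
move=> H i j eij; apply/eqP; apply: contraTT H => nij.
wlog lij : i j eij nij / (i < j)%N.
  move=> W; case: (ltngtP i j) => l; first exact: (W i j).
    by apply: (W j i (esym eij)); rewrite // eq_sym.
  by move: nij; rewrite (_ : i = j) ?eqxx //; apply: val_inj.
rewrite /injC /psC (bigD1 i) //= (bigD1 j) //= lij eij eqxx.
by [].
Qed.

Lemma card_lt m (k : {ffun 'I_m -> 'I_N}) c : injC k ->
  (\sum_(i < m) (k i < c))%N = #|[set y in fimg k | (y < c)%N]|.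
Proof.
move=> /injC_inj ik.
have -> : [set y in fimg k | (y < c)%N] = [set k i | i in [set i | (k i < c)%N]].
  apply/setP => y; rewrite inE; apply/andP/imsetP => [[/imsetP[i _ ->] l] | [i]].
    by exists i; rewrite ?inE.
  by rewrite inE => l ->; split => //; apply/imsetP; exists i.
rewrite card_in_imset; last by move=> i j _ _; apply: ik.
rewrite -sum1_card [RHS]big_mkcond /=; apply: eq_bigr => i _; rewrite inE; by case: (_ < _)%N.
Qed.

Lemma card_fimg m (k : {ffun 'I_m -> 'I_N}) : injC k -> #|fimg k| = m.
Proof. by move=> /injC_inj ik; rewrite card_imset // card_ord. Qed.

Lemma fimg_fext m (k : {ffun 'I_m -> 'I_N}) c : fimg (fext k c) = c |: fimg k.
Proof.
apply/setP => y; rewrite !inE; apply/imsetP/orP => [[i _ ->] | [/eqP -> | /imsetP[j _ ->]]].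
- case: (unliftP ord_max i) => [j ->|->].
    by right; rewrite ffunE liftK; apply/imsetP; exists j.
  by left; rewrite fext_max.
- by exists ord_max; rewrite ?fext_max.
- by exists (lift ord_max j); rewrite // ffunE liftK.
Qed.

End Clique.

Section CliqueSum.
Variable N : nat.
Variable R : comNzRingType.
Variable tt : R.

Definition qf (m : nat) : R := \prod_(1 <= i < m.+1) \sum_(j < i) tt ^+ j.

Lemma prod_fext m (w : 'I_N -> R) (k : {ffun 'I_m -> 'I_N}) c :
  \prod_(i < m.+1) w (fext k c i) = (\prod_(i < m) w (k i)) * w c.
Proof. by rewrite big_ord_recr /= fext_max; congr (_ * _); apply: eq_bigr => i _; rewrite fext_widen. Qed.

Lemma clique m (P : {set 'I_N}) (w : 'I_N -> R) (G : {set 'I_N} -> R) :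
  \sum_(k : {ffun 'I_m -> 'I_N} | injC k && (fimg k \subset P))
     tt ^+ ascC k * \prod_(i < m) w (k i) * G (fimg k)
  = qf m * \sum_(S : {set 'I_N} | (S \subset P) && (#|S| == m)) (\prod_(y in S) w y) * G S.
Proof.
elim: m G => [|m IH] G.
  pose k0 : {ffun 'I_0 -> 'I_N} := ffun0 (card_ord 0).
  have k0E : forall k : {ffun 'I_0 -> 'I_N}, k = k0 by move=> k; apply/ffunP => -[] //.
  have fk0 : fimg k0 = set0 by apply/setP => y; rewrite inE; apply/imsetP => -[[] //].
  rewrite (eq_bigl (fun k => k == k0)); last first.
    move=> k; rewrite (k0E k) eqxx fk0 sub0set andbT /injC /psC big_ord0 //.
  rewrite big_pred1_eq fk0 /ascC big_ord0 expr0 mul1r.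
  rewrite (eq_bigl (fun S => S == set0)); last first.
    move=> S; rewrite cards_eq0; case: eqP => [->|]; by rewrite ?sub0set ?andbF.
  by rewrite big_pred1_eq !big_ord0 big_set0 /qf big_geq // !mul1r.
pose G' := fun S : {set 'I_N} => \sum_(c | (c \in P) && (c \notin S))
   tt ^+ #|[set y in S | (y < c)%N]| * w c * G (c |: S).
rewrite big_fext.
rewrite (eq_bigr (fun k' => if injC k' && (fimg k' \subset P) then
   tt ^+ ascC k' * \prod_(i < m) w (k' i) * G' (fimg k') else 0)); last first.
  move=> k' _.
  case A: (injC k' && (fimg k' \subset P)).
  - move/andP: A => [ik kP].
    rewrite /G' mulr_sumr; apply: eq_big => [c|c /andP[cP cn]].
      by rewrite injC_fext fimg_fext subUset sub1set ik kP /= andbT andbC.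
    rewrite ascC_fext (card_lt _ ik) fimg_fext prod_fext exprD; ring.
  - rewrite big_pred0 // => c; rewrite injC_fext fimg_fext subUset sub1set.
    by move: A; case: (injC k'); case: (fimg k' \subset P); rewrite ?andbF.
rewrite -big_mkcond /= IH.
have -> : qf m.+1 = qf m * \sum_(j < m.+1) tt ^+ j by rewrite /qf big_nat_recr.
rewrite -mulrA; congr (_ * _).
rewrite mulr_sumr.
under eq_bigr do rewrite /G' mulr_sumr.
rewrite (exchange_big_dep xpredT) //=.
under [RHS]eq_bigr => S /andP[_ /eqP Sm] do
  rewrite -Sm -rank_sum mulr_suml.
rewrite [RHS](exchange_big_dep xpredT) //=.
apply: eq_bigr => c _.
under [RHS]eq_bigl => S do rewrite andbC.
rewrite add1_big; apply: eq_big => [S'|S'].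
  case cS: (c \in S') => /=; first by rewrite !andbF.
  rewrite subUset sub1set cardsU1 cS /=.
  by rewrite add1n eqSS andbT; case: (c \in P); rewrite ?andbF // andbT.
move=> /andP[/andP[SP Sm] /andP[cP cS]].
rewrite big_setU1 //=.
have -> : [set y in c |: S' | (y < c)%N] = [set y in S' | (y < c)%N].
  apply/setP => y; rewrite !inE; case: eqP => [->|] //=; by rewrite ltnn andbF.
ring.
Qed.

End CliqueSum.

End PB.
Import PB.

Module PC.
Set Implicit Arguments. Unset Strict Implicit. Unset Printing Implicit Defensive.

Section Tele.
Variable N : nat.
Variable R : comNzRingType.
Variable tt : R.
Variable X : 'I_N -> R.

Definition es k : R := \sum_(S : {set 'I_N} | #|S| == k) \prod_(i in S) X i.
Definition Ls a (x : 'I_N) : R :=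
  \sum_(S : {set 'I_N} | (S \subset [set~ x]) && (#|S| == a)) \prod_(y in S) (tt ^+ (y < x)%N * X y).
Definition Rs b (x : 'I_N) : R :=
  \sum_(S : {set 'I_N} | (S \subset [set~ x]) && (#|S| == b)) \prod_(y in S) (tt ^+ (x < y)%N * X y).
Definition Lp a x : R := if a is a'.+1 then Ls a' x else 0.
Definition Rp b x : R := if b is b'.+1 then Rs b' x else 0.
Definition LM a (k : nat) : R :=
  \sum_(S : {set 'I_N} | #|S| == a) \prod_(y in S) (tt ^+ (y < k)%N * X y).
Definition RM b (k : nat) : R :=
  \sum_(S : {set 'I_N} | #|S| == b) \prod_(y in S) (tt ^+ (k <= y)%N * X y).
Definition F a b : R := \sum_(x : 'I_N) X x * Ls a x * Rs b x.
Definition Fp a b : R := \sum_(x : 'I_N) X x * Lp a x * Rs b x.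
Definition Fp' a b : R := \sum_(x : 'I_N) X x * Ls a x * Rp b x.

Lemma subC1 (S : {set 'I_N}) x : (S \subset [set~ x]) = (x \notin S).
Proof.
apply/subsetP/idP => [H | H y yS].
  by apply/negP => /H; rewrite !inE eqxx.
by rewrite !inE; apply: contraNneq H => <-.
Qed.

Lemma split_x (f : 'I_N -> R) a x :
  \sum_(S : {set 'I_N} | #|S| == a) \prod_(y in S) f y =
  \sum_(S : {set 'I_N} | (S \subset [set~ x]) && (#|S| == a)) \prod_(y in S) f y +
  f x * (if a is a'.+1 then
    \sum_(S : {set 'I_N} | (S \subset [set~ x]) && (#|S| == a')) \prod_(y in S) f y else 0).
Proof.
rewrite (bigID (fun S : {set 'I_N} => x \in S)) /= addrC; congr (_ + _).
  by apply: eq_bigl => S; rewrite subC1 andbC.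
case: a => [|a].
  rewrite mulr0 big_pred0 // => S; case xS: (x \in S); rewrite ?andbF //.
  by rewrite andbT cards_eq0; apply/negP => /eqP S0; rewrite S0 inE in xS.
under eq_bigl => S do rewrite andbC.
rewrite add1_big mulr_sumr; apply: eq_big => [S|S].
  rewrite subC1 cardsU1; case: (x \in S) => //=.
move=> /andP[xS _]; by rewrite big_setU1.
Qed.

Lemma eq_Ssum (f g : 'I_N -> R) x a : (forall y, y != x -> f y = g y) ->
  \sum_(S : {set 'I_N} | (S \subset [set~ x]) && (#|S| == a)) \prod_(y in S) f y =
  \sum_(S : {set 'I_N} | (S \subset [set~ x]) && (#|S| == a)) \prod_(y in S) g y.
Proof.
move=> H; apply: eq_bigr => S /andP[SP _]; apply: eq_bigr => y yS.
by apply: H; have := subsetP SP y yS; rewrite !inE.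
Qed.

Lemma LM_S a (x : 'I_N) : LM a x.+1 = Ls a x + tt * X x * Lp a x.
Proof.
have E a' : \sum_(S : {set 'I_N} | (S \subset [set~ x]) && (#|S| == a'))
    \prod_(y in S) (tt ^+ (y < x.+1)%N * X y) = Ls a' x.
  apply: eq_Ssum => y yx; congr (tt ^+ _ * _).
  by rewrite ltnS leq_eqVlt val_eqE (negbTE yx).
rewrite /LM (split_x _ a x) ltnSn expr1 E; congr (_ + _ * _).
by case: a.
Qed.

Lemma LM_x a (x : 'I_N) : LM a x = Ls a x + X x * Lp a x.
Proof.
by rewrite /LM (split_x _ a x) ltnn expr0 mul1r; congr (_ + _ * _); case: a.
Qed.

Lemma RM_S b (x : 'I_N) : RM b x.+1 = Rs b x + X x * Rp b x.
Proof.
by rewrite /RM (split_x _ b x) ltnn expr0 mul1r; congr (_ + _ * _); case: b.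
Qed.

Lemma RM_x b (x : 'I_N) : RM b x = Rs b x + tt * X x * Rp b x.
Proof.
have E b' : \sum_(S : {set 'I_N} | (S \subset [set~ x]) && (#|S| == b'))
    \prod_(y in S) (tt ^+ (x <= y)%N * X y) = Rs b' x.
  apply: eq_Ssum => y yx; congr (tt ^+ _ * _).
  by rewrite leq_eqVlt val_eqE eq_sym (negbTE yx).
rewrite /RM (split_x _ b x) leqnn expr1 E; congr (_ + _ * _).
by case: b.
Qed.

Lemma LM_N a : LM a N = tt ^+ a * es a.
Proof.
rewrite /LM /es mulr_sumr; apply: eq_bigr => S /eqP Sa.
by rewrite big_split /= (eq_bigr (fun _ => tt)) ?prodr_const ?Sa // => y _; rewrite ltn_ord.
Qed.

Lemma LM_0 a : LM a 0 = es a.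
Proof. by apply: eq_bigr => S _; apply: eq_bigr => y _; rewrite mul1r. Qed.

Lemma RM_N b : RM b N = es b.
Proof.
apply: eq_bigr => S _; apply: eq_bigr => y _.
by rewrite leqNgt ltn_ord mul1r.
Qed.

Lemma RM_0 b : RM b 0 = tt ^+ b * es b.
Proof.
rewrite /RM /es mulr_sumr; apply: eq_bigr => S /eqP Sa.
by rewrite big_split /= (eq_bigr (fun _ => tt)) ?prodr_const ?Sa.
Qed.

Lemma tele a b : (tt - 1) * (Fp a b - Fp' a b) = (tt ^+ a - tt ^+ b) * (es a * es b).
Proof.
have := @telescope_sumr R 0 N (fun k => LM a k * RM b k) (leq0n N).
rewrite big_mkord LM_N RM_N LM_0 RM_0 => H.
have -> : (tt ^+ a - tt ^+ b) * (es a * es b) =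
   tt ^+ a * es a * es b - es a * (tt ^+ b * es b) by ring.
rewrite -H /Fp /Fp' -sumrB mulr_sumr; apply: eq_bigr => x _.
rewrite LM_S RM_S LM_x RM_x; ring.
Qed.

End Tele.

End PC.
Import PC.

Module PD.
Set Implicit Arguments. Unset Strict Implicit. Unset Printing Implicit Defensive.

Section Closed.
Variable N : nat.
Variable R : idomainType.
Variable tt : R.
Hypothesis tt1 : tt - 1 != 0.
Variable X : 'I_N -> R.

Local Notation F := (F tt X).
Local Notation es := (es X).
Definition q k : R := \sum_(i < k) tt ^+ i.

Lemma es0 : es 0 = 1.
Proof.
rewrite /PC.es (eq_bigl (fun S => S == set0)) ?big_pred1_eq ?big_set0 //.
by move=> S; rewrite cards_eq0.
Qed.

Lemma cancel1 (u v : R) : (tt - 1) * u = (tt - 1) * v -> u = v.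
Proof. exact: mulfI. Qed.

Lemma powq d : tt ^+ d = 1 + (tt - 1) * q d.
Proof. by rewrite /q -subrX1 addrC subrK. Qed.

Lemma RecL a b : (a <= b)%N ->
  F a.+1 b = F a b.+1 + tt ^+ a.+1 * q (b - a) * (es a.+1 * es b.+1).
Proof.
move=> ab; apply: cancel1; have := tele tt X a.+1 b.+1.
rewrite /Fp /Fp' /Lp /Rp -/(F a b.+1) -/(F a.+1 b).
have -> : tt ^+ b.+1 = tt ^+ a.+1 * tt ^+ (b - a) by rewrite -exprD; congr (_ ^+ _); lia.
rewrite (powq (b - a)) => E.
have -> : (tt - 1) * F a.+1 b = (tt - 1) * F a b.+1 -
   (tt ^+ a.+1 - tt ^+ a.+1 * (1 + (tt - 1) * q (b - a))) * (es a.+1 * es b.+1).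
  by rewrite -E; ring.
ring.
Qed.

Lemma RecR a b : (b <= a)%N ->
  F a b.+1 = F a.+1 b + tt ^+ b.+1 * q (a - b) * (es a.+1 * es b.+1).
Proof.
move=> ab; apply: cancel1; have := tele tt X a.+1 b.+1.
rewrite /Fp /Fp' /Lp /Rp -/(F a b.+1) -/(F a.+1 b).
have -> : tt ^+ a.+1 = tt ^+ b.+1 * tt ^+ (a - b) by rewrite -exprD; congr (_ ^+ _); lia.
rewrite (powq (a - b)) => E.
have -> : (tt - 1) * F a b.+1 = (tt - 1) * F a.+1 b +
   (tt ^+ b.+1 * (1 + (tt - 1) * q (a - b)) - tt ^+ b.+1) * (es a.+1 * es b.+1).
  by rewrite -E; ring.
ring.
Qed.

Lemma Base0 b : F 0 b = q b.+1 * es b.+1.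
Proof.
apply: cancel1; have := tele tt X 0 b.+1.
rewrite /Fp /Fp' /Lp /Rp -/(F 0 b) big1 ?es0 => [E|x _]; last by rewrite mulr0 mul0r.
have -> : (tt - 1) * F 0 b = - ((tt - 1) * (0 - F 0 b)) by ring.
rewrite E (powq b.+1); ring.
Qed.

Lemma Base0' a : F a 0 = q a.+1 * es a.+1.
Proof.
apply: cancel1; have := tele tt X a.+1 0.
rewrite /Fp /Fp' /Lp /Rp -/(F a 0) /= big1 ?es0 => [E|x _]; last by rewrite mulr0.
have -> : (tt - 1) * F a 0 = (tt - 1) * (F a 0 - 0) by ring.
rewrite E (powq a.+1); ring.
Qed.

Definition G a b : R := \sum_(l < (minn a b).+1)
  tt ^+ l * q (a + b + 1 - 2 * l) * (es (a + b + 1 - l)%N * es l).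

Lemma closed_form a b : F a b = G a b.
Proof.
move Em: (minn a b) => m; elim: m a b Em => [|m IH] a b Em.
  rewrite /G Em big_ord1 (_ : nat_of_ord (@ord0 0) = 0%N) // expr0 muln0 !subn0 es0 mul1r mulr1.
  case: a Em => [|a] Em; first by rewrite Base0 add0n addn1.
  case: b Em => [|b] Em; first by rewrite Base0' addn0 addn1.
  by rewrite minnSS in Em.
case: a Em => [|a] Em; first by rewrite min0n in Em.
case: (ltnP a b) => ab.
  have m1 : minn a.+1 b = a.+1 by apply/minn_idPl.
  have m2 : minn a b.+1 = a by apply/minn_idPl; lia.
  rewrite RecL; last by lia.
  rewrite IH; last by lia.
  rewrite /G m1 m2 [RHS]big_ord_recr /=; congr (_ + _).
    by apply: eq_bigr => l _; rewrite addSnnS.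
  have -> : (a.+1 + b + 1 - 2 * a.+1 = b - a)%N by lia.
  have -> : (a.+1 + b + 1 - a.+1 = b.+1)%N by lia.
  by rewrite [es b.+1 * _]mulrC.
case: b Em ab => [|b] Em ab; first by rewrite minn0 in Em.
have m1 : minn a.+1 b.+1 = b.+1 by apply/minn_idPr; lia.
have m2 : minn a.+2 b = b by apply/minn_idPr; lia.
rewrite (RecR (a := a.+1)); last by lia.
rewrite IH; last by lia.
rewrite /G m1 m2 [RHS]big_ord_recr /=; congr (_ + _).
  by apply: eq_bigr => l _; rewrite addSnnS.
have -> : (a.+1 + b.+1 + 1 - 2 * b.+1 = a.+1 - b)%N by lia.
have -> : (a.+1 + b.+1 + 1 - b.+1 = a.+2)%N by lia.
by [].
Qed.

End Closed.

End PD.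
Import PD.

Module PE.
Set Implicit Arguments. Unset Strict Implicit. Unset Printing Implicit Defensive.

Section Join.
Variable T : finType.
Variables p q : nat.

Definition join (k1 : {ffun 'I_p -> T}) (k2 : {ffun 'I_q -> T}) : {ffun 'I_(p + q) -> T} :=
  [ffun i => match split i with inl i1 => k1 i1 | inr i2 => k2 i2 end].

Lemma join_l k1 k2 i : join k1 k2 (lshift q i) = k1 i.
Proof. by rewrite ffunE (unsplitK (inl _ i)). Qed.

Lemma join_r k1 k2 j : join k1 k2 (rshift p j) = k2 j.
Proof. by rewrite ffunE (unsplitK (inr _ j)). Qed.

Lemma big_join (R : Type) (idx : R) (op : Monoid.com_law idx)
   (P : pred {ffun 'I_(p + q) -> T}) (F : {ffun 'I_(p + q) -> T} -> R) :
  \big[op/idx]_(k | P k) F k =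
  \big[op/idx]_(k1 : {ffun 'I_p -> T}) \big[op/idx]_(k2 | P (join k1 k2)) F (join k1 k2).
Proof.
rewrite pair_big_dep /=.
rewrite (reindex (fun pr : {ffun 'I_p -> T} * {ffun 'I_q -> T} => join pr.1 pr.2)) /=.
  by apply: eq_bigl.
exists (fun k => ([ffun i => k (lshift q i)], [ffun j => k (rshift p j)])).
  move=> [k1 k2] _ /=; congr (_, _); apply/ffunP => i; by rewrite ffunE ?join_l ?join_r.
move=> k _ /=; apply/ffunP => i; rewrite ffunE.
by case: splitP => [j|j] /= E; rewrite ffunE; congr (k _); apply: val_inj; rewrite /= E.
Qed.

End Join.


Section Graph.
Variables a b N : nat.
Local Notation n := (a.+1 + b)%N.
Local Notation e := (@nuio_edge n (m_cor n a.+1)).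

Lemma edge_ll (i j : 'I_a.+1) : e (lshift b i) (lshift b j) = (i < j)%N.
Proof.
rewrite /nuio_edge /m_cor /=; have hj := ltn_ord j; have hj' := ltn_ord (lshift b j).
by case: ifP => _; rewrite ?hj ?hj' andbT.
Qed.

Lemma edge_lr (i : 'I_a.+1) (j : 'I_b) : e (lshift b i) (rshift a.+1 j) = (a <= i)%N.
Proof.
rewrite /nuio_edge /m_cor /=; have hi := ltn_ord i; have hj' := ltn_ord (rshift a.+1 j).
rewrite ltnS (_ : (i < a.+1 + j)%N = true); last by lia.
case: ifP => h /=.
  by rewrite ltnS leqNgt ltnS leq_addr /=; apply/esym/negbTE; rewrite -ltnNge.
rewrite hj'; apply/esym; move/negbT: h.
by rewrite -leqNgt.
Qed.

Lemma edge_rl (i : 'I_b) (j : 'I_a.+1) : e (rshift a.+1 i) (lshift b j) = false.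
Proof.
rewrite /nuio_edge /=; have hj := ltn_ord j.
by rewrite (_ : (a.+1 + i < j)%N = false) //; lia.
Qed.

Lemma edge_rr (i j : 'I_b) : e (rshift a.+1 i) (rshift a.+1 j) = (i < j)%N.
Proof.
rewrite /nuio_edge /m_cor /= ltn_add2l; have hj' := ltn_ord (rshift a.+1 j).
rewrite (_ : ((a.+1 + i).+1 < a.+1)%N = false); last by lia.
by rewrite hj' andbT.
Qed.

Lemma dsum (OP : rel 'I_N) (kL : {ffun 'I_a.+1 -> 'I_N}) (kB : {ffun 'I_b -> 'I_N}) :
  (\sum_(i < n) \sum_(j < n) (e i j && OP (join kL kB i) (join kL kB j)) =
   \sum_(i < a.+1) \sum_(j < a.+1) ((i < j) && OP (kL i) (kL j)) +
   \sum_(j < b) OP (kL ord_max) (kB j) +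
   \sum_(i < b) \sum_(j < b) ((i < j) && OP (kB i) (kB j)))%N.
Proof.
under eq_bigr => i _ do rewrite big_split_ord.
rewrite big_split_ord /= !big_split /=.
rewrite [X in (_ + (X + _))%N]big1 ?add0n; last first.
  by move=> i _; rewrite big1 // => j _; rewrite edge_rl.
congr (_ + _ + _)%N.
- by apply: eq_bigr => i _; apply: eq_bigr => j _; rewrite edge_ll !join_l.
- rewrite big_ord_recr /= big1 ?add0n; last first.
    by move=> i _; apply: big1 => j _; rewrite edge_lr /= leqNgt ltn_ord.
  by apply: eq_bigr => j _; rewrite edge_lr leqnn join_l join_r.
- by apply: eq_bigr => i _; apply: eq_bigr => j _; rewrite edge_rr !join_r.
Qed.

End Graph.

End PE.
Import PE.

Module PF.
Set Implicit Arguments. Unset Strict Implicit. Unset Printing Implicit Defensive.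

Lemma ascE n N (e : 'I_n -> 'I_n -> bool) (k : {ffun 'I_n -> 'I_N}) :
  Defs.asc e k = (\sum_(i < n) \sum_(j < n) (e i j && (k i < k j)))%N.
Proof.
rewrite /asc -sum1_card pair_bigA /= big_mkcond /=.
by apply: eq_bigr => -[i j] _; rewrite inE /=; case: (_ && _).
Qed.

Lemma properE n N (e : 'I_n -> 'I_n -> bool) (k : {ffun 'I_n -> 'I_N}) :
  Defs.proper e k = (\sum_(i < n) \sum_(j < n) (e i j && (k i == k j)) == 0)%N.
Proof.
rewrite /proper sum_nat_eq0; apply: eq_forallb => i.
rewrite sum_nat_eq0; apply: eq_forallb => j.
by case: (e i j); case: (k i == k j).
Qed.

Lemma notin_fimg N m (k : {ffun 'I_m -> 'I_N}) x :
  ((\sum_(j < m) (x == k j)) == 0)%N = (x \notin fimg k).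
Proof.
rewrite sum_nat_eq0 /fimg; apply/forallP/negP => [H /imsetP[i _ ci] | H i].
  by move: (H i); rewrite ci eqxx.
by case e: (x == k i) => //; case: H; apply/imsetP; exists i => //; rewrite (eqP e).
Qed.

Section Main.
Variables a b N : nat.
Local Notation n := (a.+1 + b)%N.
Local Notation M := {mpoly tpoly[N]}.
Definition tt : M := ('X : tpoly)%:MP.
Definition XX (i : 'I_N) : M := 'X_i.

Lemma stepA : @chromQS n N (@nuio_edge n (m_cor n a.+1)) =
  \sum_(kL : {ffun 'I_a.+1 -> 'I_N})
   \sum_(kB : {ffun 'I_b -> 'I_N} | injC kL && (fimg kB \subset [set~ kL ord_max]) && injC kB)
    tt ^+ (ascC kL + \sum_(j < b) (kL ord_max < kB j) + ascC kB)%N *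
      ((\prod_(i < a.+1) XX (kL i)) * \prod_(j < b) XX (kB j)).
Proof.
rewrite /chromQS big_join; apply: eq_bigr => kL _; apply: eq_big => [kB|kB _].
  by rewrite properE (dsum (fun u v => u == v)) !addn_eq0 notin_fimg subC1.
rewrite ascE (dsum (fun u v => (u < v)%N)) rmorphXn big_split_ord /=.
congr (_ * (_ * _)); apply: eq_bigr => i _; by rewrite ?join_l ?join_r.
Qed.

Lemma prod_exp m (f : 'I_m -> nat) : \prod_(j < m) tt ^+ f j = tt ^+ (\sum_(j < m) f j)%N.
Proof. by rewrite (big_morph _ (exprD tt) (expr0 tt)). Qed.

Lemma stepB :
  \sum_(kL : {ffun 'I_a.+1 -> 'I_N})
   \sum_(kB : {ffun 'I_b -> 'I_N} | injC kL && (fimg kB \subset [set~ kL ord_max]) && injC kB)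
    tt ^+ (ascC kL + \sum_(j < b) (kL ord_max < kB j) + ascC kB)%N *
      ((\prod_(i < a.+1) XX (kL i)) * \prod_(j < b) XX (kB j))
  = \sum_(kL : {ffun 'I_a.+1 -> 'I_N} | injC kL)
      tt ^+ ascC kL * \prod_(i < a.+1) XX (kL i) * (qf tt b * Rs tt XX b (kL ord_max)).
Proof.
rewrite [RHS]big_mkcond; apply: eq_bigr => kL _.
case iL: (injC kL) => /=; last by rewrite big_pred0.
set x := kL ord_max.
have -> : qf tt b * Rs tt XX b x = \sum_(kB : {ffun 'I_b -> 'I_N} | injC kB && (fimg kB \subset [set~ x]))
    tt ^+ ascC kB * \prod_(j < b) (tt ^+ (x < kB j)%N * XX (kB j)) * 1.
  rewrite (clique tt b [set~ x] (fun y => tt ^+ (x < y)%N * XX y) (fun _ => 1)).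
  by congr (_ * _); apply: eq_bigr => S _; rewrite mulr1.
rewrite mulr_sumr; apply: eq_big => [kB|kB _]; first by rewrite andbC.
rewrite big_split /= prod_exp !exprD; ring.
Qed.

Lemma stepC :
  \sum_(kL : {ffun 'I_a.+1 -> 'I_N} | injC kL)
      tt ^+ ascC kL * \prod_(i < a.+1) XX (kL i) * (qf tt b * Rs tt XX b (kL ord_max))
  = qf tt a * qf tt b * PC.F tt XX a b.
Proof.
rewrite big_fext.
transitivity (\sum_(kA : {ffun 'I_a -> 'I_N}) \sum_(x | injC kA && (fimg kA \subset [set~ x]))
   tt ^+ ascC kA * \prod_(i < a) (tt ^+ (kA i < x)%N * XX (kA i)) * (XX x * qf tt b * Rs tt XX b x)).
  apply: eq_bigr => kA _; apply: eq_big => [x|x _]; first by rewrite injC_fext subC1.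
  rewrite ascC_fext prod_fext fext_max big_split /= prod_exp exprD; ring.
rewrite (exchange_big_dep xpredT) //= /PC.F mulr_sumr; apply: eq_bigr => x _.
rewrite (clique tt a [set~ x] (fun y => tt ^+ (y < x)%N * XX y) (fun _ => XX x * qf tt b * Rs tt XX b x)).
rewrite -mulr_suml /Ls; ring.
Qed.

Lemma tt1 : tt - 1 != 0.
Proof.
rewrite /tt -(rmorph1 (@mpolyC N tpoly)) -rmorphB /= mpolyC_eq0 -polyC1.
by rewrite -size_poly_eq0 size_XsubC.
Qed.

Lemma qfactE m : (qfact m)%:MP = qf tt m :> M.
Proof.
rewrite /qfact /qf rmorph_prod; apply: eq_bigr => i _.
by rewrite /qint rmorph_sum; apply: eq_bigr => j _; rewrite rmorphXn.
Qed.

Lemma qintE m : (qint m)%:MP = q tt m :> M.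
Proof. by rewrite /qint rmorph_sum; apply: eq_bigr => j _; rewrite rmorphXn. Qed.

End Main.



End PF.
Import PF.

Unset Implicit Arguments. Set Strict Implicit.
Theorem corollary4p4 (n r : nat) (Hr1 : (1 <= r)%N) (Hrn : (r <= n - 1)%N) (N : nat) :
  @chromQS n N (@nuio_edge n (m_cor n r)) =
  \sum_(l < (minn (n - r) (r - 1)).+1)
     ('X^l * qfact (n - r) * qfact (r - 1) * qint (n - 2 * l) : tpoly)%:MP
       * e2 N (n - l) l.
Proof.
have [a ra] : exists a, r = a.+1 by exists r.-1; lia.
subst r.
have [b nb] : exists b, n = (a.+1 + b)%N by exists (n - a.+1)%N; lia.
subst n.
rewrite stepA stepB stepC (closed_form (tt1 N)) /G.
have -> : (a.+1 + b - a.+1 = b)%N by lia.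
have -> : (a.+1 - 1 = a)%N by lia.
rewrite minnC mulr_sumr; apply: eq_bigr => l _.
rewrite !rmorphM /= !qfactE qintE /e2.
have -> : (('X^l : tpoly))%:MP = tt N ^+ l by rewrite rmorphXn.
have E : forall k, es (XX (N:=N)) k = mesym N tpoly k by [].
have -> : (a + b + 1 = a.+1 + b)%N by lia.
rewrite !E; ring.
Qed.
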